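(* Assume the univalence axiom. Let $A\xrightarrow{i}E\xrightarrow{p}B$ be a short exact sequence of abelian groups, $G$ an abelian group, $G\to F\to E$ a short exact sequence, and suppose given path data $i^*(F)=\mathrm{pt}$, i.e. an isomorphism $\psi:G\oplus A\cong i^*(F)$ of middle groups respecting inclusions of $G$ and projections to $A$. Let $G\to F/A\to B$ be the short exact sequence whose middle group is the cokernel $F/A$ of $A\to G\oplus A\xrightarrow{\psi}i^*(F)\to F$, with maps $G\to F\to F/A$ and $F/A\to B$ induced by $F\to E\xrightarrow{p}B$. Then there is path data $p^*(F/A)=F$, i.e. an isomorphism between the middle group of $p^*(F/A)$ and $F$ respecting the inclusions of $G$ and the projections to $E$.
   Context: Short exact sequence $X\xrightarrow{j}M\xrightarrow{q}Y$: $j$ injective, $q$ surjective, $q\circ j=0$, and $X\to\ker q$ surjective. For $g:Y'\to Y$, the pullback $g^*(M)$ is the short exact sequence $X\to M\times_Y Y'\to Y'$ with middle group $\{(m,y')\mid q(m)=g(y')\}$, inclusion $x\mapsto (j(x),0)$ and projection $(m,y')\mapsto y'$. The trivial sequence $\mathrm{pt}$ from $G$ to $A$ is $G\to G\oplus A\to A$. *)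

(* Defs.v *)
From HB Require Import structures.
From mathcomp Require Import all_boot all_algebra.
Set Implicit Arguments. Unset Strict Implicit. Unset Printing Implicit Defensive.
Import GRing.Theory.
Local Open Scope ring_scope.

Definition ses (X M Y : zmodType) (j : {additive X -> M}) (q : {additive M -> Y}) : Prop :=
  injective j /\ (forall y, exists m, q m = y) /\ (forall x, q (j x) = 0)
  /\ (forall m, q m = 0 -> exists x, j x = m).

Definition iso_onto (U V : zmodType) (phi : {additive U -> V}) (S : V -> Prop) : Prop :=
  injective phi /\ (forall u, S (phi u)) /\ (forall v, S v -> exists u, phi u = v).

(* Main.v *)
Require Import Defs.
From HB Require Import structures.
From mathcomp Require Import all_boot all_algebra.
Import GRing.Theory.
Local Open Scope ring_scope.

Definition pairf (U V W : zmodType) (f : {additive U -> V}) (g : {additive U -> W})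
  (x : U) : (V * W)%type := (f x, g x).

Arguments pairf {U V W}.

Lemma pairf_is_zmod (U V W : zmodType) (f : {additive U -> V}) (g : {additive U -> W}) :
  GRing.zmod_morphism (pairf f g).
Proof. by move=> x y; rewrite /pairf !raddfB. Qed.

HB.instance Definition _ (U V W : zmodType) (f : {additive U -> V}) (g : {additive U -> W}) :=
  GRing.isZmodMorphism.Build U (V * W)%type (pairf f g) (@pairf_is_zmod U V W f g).

Theorem lemma15 (A E B G F Q : zmodType)
  (i : {additive A -> E}) (p : {additive E -> B})
  (jF : {additive G -> F}) (qF : {additive F -> E})
  (psi : {additive (G * A)%type -> (F * A)%type})
  (pi : {additive F -> Q}) (r : {additive Q -> B}) :
  ses i p -> ses jF qF ->
  (* psi : G (+) A ~= i^*(F) = {(f,a) | qF f = i a}, respecting G and projections to A *)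
  iso_onto psi (fun v => qF v.1 = i v.2) ->
  (forall g, psi (g, 0) = (jF g, 0)) ->
  (forall u, (psi u).2 = u.2) ->
  (* pi : F -> Q is the cokernel of A -> G (+) A -> i^*(F) -> F *)
  (forall y, exists f, pi f = y) ->
  (forall f, pi f = 0 <-> exists a, (psi (0, a)).1 = f) ->
  (* r : Q -> B is induced by p o qF *)
  (forall f, r (pi f) = p (qF f)) ->
  (* path data p^*(Q) = F *)
  exists Phi : {additive F -> (Q * E)%type},
    iso_onto Phi (fun v => r v.1 = p v.2)
    /\ (forall g, Phi (jF g) = (pi (jF g), 0))
    /\ (forall f, (Phi f).2 = qF f).
Proof.
move=> [iinj [psurj [pi0 pker]]] [jinj [qsurj [qj0 qker]]] [psinj [psS pssurj]]
  psG ps2 pisurj piker rpi.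
exists (pairf pi qF); split; last first.
  split=> [g|f] //=; rewrite /pairf /=; first by rewrite qj0.
split; last split.
- move=> x y /= Hxy.
  apply/eqP; rewrite -subr_eq0; apply/eqP.
  move: Hxy; rewrite /pairf /= => -[E1 E2].
  have H1 : pi (x - y) = 0 by rewrite raddfB E1 subrr.
  have H2 : qF (x - y) = 0 by rewrite raddfB E2 subrr.
  have [a Ha] := (proj1 (piker _) H1).
  have Hs := psS (0, a); rewrite ps2 /= Ha H2 in Hs.
  have a0 : a = 0 by apply: iinj; rewrite raddf0.
  by rewrite -Ha a0 (raddf0 psi).
- by move=> f /=; rewrite /pairf /= rpi.
- move=> [q e] /= Hqe.
  have [f Hf] := pisurj q.
  have : p (e - qF f) = 0 by rewrite raddfB -rpi Hf Hqe subrr.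
  move=> /pker [a Ha].
  exists (f + (psi (0, a)).1).
  have Hs := psS (0, a); rewrite ps2 /= in Hs.
  have H0 : pi (psi (0, a)).1 = 0 by apply/piker; exists a.
  rewrite /pairf !raddfD H0 addr0 Hf Hs Ha.
  by congr pair; rewrite addrC subrK.
Qed.
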